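(* Let $\mathfrak F$ be a semiclosed generalized flag in $V$. Then every nonzero proper closed subspace of $V$ which is stable under $\mathrm{St}_{\mathfrak F}$ is both a union of members of $\mathfrak F$ and an intersection of members of $\mathfrak F$.
   Context: $V,V_*$ are countable-dimensional complex vector spaces with a nondegenerate pairing $\langle\cdot,\cdot\rangle$; $\mathfrak{gl}(V,V_* )=V\otimes V_*$ acts on $V$ by $(v\otimes w)u=\langle u,w\rangle v$. For a subspace $F$ of $V$ (resp. $V_*$), $F^\perp$ is its orthogonal in $V_*$ (resp. $V$); $F$ is closed if $F=F^{\perp\perp}$, and $\overline F:=F^{\perp\perp}$. A chain is a totally ordered (by inclusion) set of subspaces. In a chain, $C'\subsetneq C''$ form an immediate predecessor–successor pair (''pair'') if no member lies strictly between them. A generalized flag is a chain $\mathfrak F$ such that (i) every member belongs to some pair of $\mathfrak F$, and (ii) for each nonzero $v\in V$ there is a pair $F'\subset F''$ in $\mathfrak F$ with $v\in F''\setminus F'$. Pairs are indexed by a set $A$: $F'_\alpha\subset F''_\alpha$. $\mathfrak F$ is semiclosed if $\overline{F'_\alpha}\in\{F'_\alpha,F''_\alpha\}$ for all $\alpha\in A$. $\mathrm{St}_{\mathfrak F}$ denotes the stabilizer of $\mathfrak F$ in $\mathfrak{gl}(V,V_* )$ (elements mapping each member into itself). *)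

(* Defs.v *)
From HB Require Import structures.
From mathcomp Require Import all_boot all_order all_algebra.
Set Implicit Arguments. Unset Strict Implicit. Unset Printing Implicit Defensive.
Import GRing.Theory Num.Theory.
Local Open Scope ring_scope.

Section Defs.
Variable K : numClosedFieldType.   (* stands for the complex field C *)

Definition countable_dim (V : lmodType K) : Prop :=
  exists e : nat -> V, forall v : V,
    exists (n : nat) (c : nat -> K), v = \sum_(i < n) c i *: e i.

Variables (V Vs : lmodType K) (pair : V -> Vs -> K).

Definition bilinear_pairing : Prop :=
  (forall (a : K) (u v : V) (w : Vs), pair (a *: u + v) w = a * pair u w + pair v w) /\
  (forall (a : K) (v : V) (w w' : Vs), pair v (a *: w + w') = a * pair v w + pair v w').

Definition pairing_nondeg : Prop :=
  (forall v : V, (forall w : Vs, pair v w = 0) -> v = 0) /\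
  (forall w : Vs, (forall v : V, pair v w = 0) -> w = 0).

Definition subspace (T : lmodType K) (F : T -> Prop) : Prop :=
  F 0 /\ (forall (a : K) (u v : T), F u -> F v -> F (a *: u + v)).

Definition sub_set (A B : V -> Prop) : Prop := forall v, A v -> B v.
Definition same_set (A B : V -> Prop) : Prop := forall v, A v <-> B v.
Definition strict_sub (A B : V -> Prop) : Prop := sub_set A B /\ ~ sub_set B A.

Definition perpV (F : V -> Prop) : Vs -> Prop := fun w => forall v, F v -> pair v w = 0.
Definition perpVs (G : Vs -> Prop) : V -> Prop := fun v => forall w, G w -> pair v w = 0.
Definition pclosure (F : V -> Prop) : V -> Prop := perpVs (perpV F).
Definition pclosed (F : V -> Prop) : Prop := same_set F (pclosure F).

(* gl(V,V_* ) = V (x) V_* : an element is a finite sum of tensors v (x) w,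
   acting by (v (x) w) u = <u,w> v. *)
Definition gl_act (x : seq (V * Vs)) (u : V) : V :=
  \sum_(p <- x) pair u p.2 *: p.1.

Definition subsp_chain (Fl : (V -> Prop) -> Prop) : Prop :=
  (forall C, Fl C -> subspace C) /\
  (forall A B, Fl A -> Fl B -> sub_set A B \/ sub_set B A).

Definition is_pair (Fl : (V -> Prop) -> Prop) (A B : V -> Prop) : Prop :=
  Fl A /\ Fl B /\ strict_sub A B /\
  ~ (exists C, Fl C /\ strict_sub A C /\ strict_sub C B).

Definition generalized_flag (Fl : (V -> Prop) -> Prop) : Prop :=
  subsp_chain Fl /\
  (forall C, Fl C -> exists D, is_pair Fl C D \/ is_pair Fl D C) /\
  (forall v : V, v <> 0 -> exists A B, is_pair Fl A B /\ B v /\ ~ A v).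

Definition semiclosed (Fl : (V -> Prop) -> Prop) : Prop :=
  forall A B, is_pair Fl A B -> same_set (pclosure A) A \/ same_set (pclosure A) B.

Definition in_St (Fl : (V -> Prop) -> Prop) (x : seq (V * Vs)) : Prop :=
  forall C, Fl C -> forall u, C u -> C (gl_act x u).

Definition St_stable (Fl : (V -> Prop) -> Prop) (W : V -> Prop) : Prop :=
  forall x, in_St Fl x -> forall u, W u -> W (gl_act x u).

End Defs.

(* Main.v *)
Require Import Defs.
From HB Require Import structures.
From mathcomp Require Import all_boot all_order all_algebra.
From Stdlib Require Import Classical.
Import GRing.Theory Num.Theory.
Local Open Scope ring_scope.

Section Help.
Variable K : numClosedFieldType.
Variables (V Vs : lmodType K) (pair : V -> Vs -> K).
Variable Fl : (V -> Prop) -> Prop.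
Hypothesis hflag : generalized_flag Fl.

Lemma pair_split A B C : is_pair Fl A B -> Fl C -> sub_set C A \/ sub_set B C.
Proof.
move=> [FA [FB [sAB nC]]] FC.
case: hflag => [[_ hcmp] _].
case: (hcmp C A FC FA) => [h|h]; first by left.
case: (classic (sub_set C A)) => [h'|nCA]; first by left.
case: (hcmp C B FC FB) => [h2|h2]; last by right.
case: (classic (sub_set B C)) => [h3|nBC]; first by right.
exfalso; apply: nC; exists C; split=> //; split; split=> //.
Qed.

Lemma scale_sub (C : V -> Prop) (a : K) u : subspace C -> C u -> C (a *: u).
Proof. by move=> [C0 CS] Cu; rewrite -[a *: u]addr0; apply: CS. Qed.

Lemma closure_mono (A B : V -> Prop) : sub_set A B ->
  sub_set (pclosure pair A) (pclosure pair B).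
Proof.
move=> sAB v hv w hw; apply: hv => x Ax; exact: hw _ (sAB _ Ax).
Qed.

Variable W : V -> Prop.
Hypothesis hW : subspace W.
Hypothesis hst : St_stable pair Fl W.

Lemma lemG v A B u : W v -> is_pair Fl A B -> B u -> ~ pclosure pair A v -> W u.
Proof.
move=> Wv pAB Bu ncl.
have [w [hw hvw]] : exists w, perpV pair A w /\ pair v w <> 0.
  apply: NNPP => hn; apply: ncl => w hw; apply: NNPP => hne; apply: hn.
  by exists w.
have act : forall c, gl_act pair [:: (u, w)] c = pair c w *: u.
  by move=> c; rewrite /gl_act big_cons big_nil addr0.
have hx : in_St pair Fl [:: (u, w)].
  move=> C FC c Cc; rewrite act.
  have sC : subspace C by case: hflag => [[hs _] _]; apply: hs.
  case: (@pair_split _ _ _ pAB FC) => [sCA|sBC].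
    by rewrite (hw c (sCA _ Cc)) scale0r; case: sC.
  by apply: scale_sub => //; apply: sBC.
have := hst _ hx _ Wv; rewrite act => Wx.
have -> : u = (pair v w)^-1 *: (pair v w *: u).
  by rewrite scalerA mulVf ?scale1r //; apply/eqP.
exact: scale_sub.
Qed.

Hypothesis hsc : semiclosed pair Fl.
Hypothesis hcl : pclosed pair W.

Lemma main v A B : W v -> is_pair Fl A B -> B v -> ~ A v -> sub_set B W.
Proof.
move=> Wv pAB Bv nAv.
case: (hsc _ _ pAB) => hcA.
  move=> u Bu; apply: (@lemG _ _ _ _ Wv pAB Bu) => /hcA; exact: nAv.
have sAW : sub_set A W.
  move=> u Au.
  case: (classic (u = 0)) => [->|nz]; first by case: hW.
  case: hflag => [_ [_ hpt]].
  have [A' [B' [pAB' [B'u nA'u]]]] := hpt u nz.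
  have sB'A : sub_set B' A.
    case: (@pair_split _ _ _ pAB' (proj1 pAB)) => // h; exfalso; exact: nA'u (h _ Au).
  apply: (@lemG _ _ _ _ Wv pAB' B'u) => hc; apply: nAv; apply: sB'A.
  case: (hsc _ _ pAB') => h; first by apply: (proj1 (pAB'.2.2.1)); apply/h.
  by apply/h.
move=> u Bu; apply: (proj2 (hcl u)); apply: (@closure_mono _ _ sAW); exact: (proj2 (hcA u) Bu).
Qed.

End Help.

Theorem lemma3p1 (K : numClosedFieldType) (V Vs : lmodType K)
  (pair : V -> Vs -> K)
  (hV : countable_dim V) (hVs : countable_dim Vs)
  (hbil : bilinear_pairing pair) (hnd : pairing_nondeg pair)
  (Fl : (V -> Prop) -> Prop)
  (hflag : generalized_flag Fl) (hsc : semiclosed pair Fl)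
  (W : V -> Prop) (hW : subspace W)
  (hnz : exists v, W v /\ v <> 0) (hprop : exists v, ~ W v)
  (hcl : pclosed pair W) (hst : St_stable pair Fl W) :
  (exists S : (V -> Prop) -> Prop, (forall C, S C -> Fl C) /\
     forall v, W v <-> exists C, S C /\ C v) /\
  (exists S : (V -> Prop) -> Prop, (forall C, S C -> Fl C) /\
     forall v, W v <-> forall C, S C -> C v).
Proof.
have hpt := proj2 (proj2 hflag).
have big : forall v, W v -> v <> 0 -> exists C, (Fl C /\ sub_set C W) /\ C v.
  move=> v Wv nz; have [A [B [pAB [Bv nAv]]]] := hpt v nz.
  exists B; split=> //; split; first exact: pAB.2.1.
  exact: (@main _ _ _ _ _ hflag _ hW hst hsc hcl _ _ _ Wv pAB Bv nAv).
split.
  exists (fun C => Fl C /\ sub_set C W); split; first by move=> C [].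
  move=> v; split; last by move=> [C [[_ h] Cv]]; apply: h.
  move=> Wv; case: (classic (v = 0)) => [->|nz]; last exact: big.
  have [v0 [Wv0 nz0]] := hnz.
  have [C [[FC sC] _]] := big v0 Wv0 nz0.
  exists C; split=> //.
  by have [] := (proj1 (proj1 hflag)) C FC.
exists (fun C => Fl C /\ sub_set W C); split; first by move=> C [].
move=> v; split; first by move=> Wv C [_ h]; apply: h.
move=> hall; apply: NNPP => nWv.
have nz : v <> 0 by move=> e; apply: nWv; rewrite e; case: hW.
have [A [B [pAB [Bv nAv]]]] := hpt v nz.
apply: nAv; apply: hall; split; first exact: pAB.1.
move=> z Wz; apply: NNPP => nAz.
have nzz : z <> 0 by move=> e; apply: nAz; rewrite e; have [] := (proj1 (proj1 hflag)) A pAB.1.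
have [A'' [B'' [pAB'' [B''z nA''z]]]] := hpt z nzz.
have sBB : sub_set B B''.
  case: (@pair_split _ _ Fl hflag _ _ _ pAB pAB''.2.1) => // h; exfalso; exact: nAz (h _ B''z).
apply: nWv; apply: (@main _ _ _ _ _ hflag _ hW hst hsc hcl _ _ _ Wz pAB'' B''z nA''z); exact: sBB.
Qed.
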